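(* Let $n\ge2$ and $D>0$. There exist $t_1,C>0$ such that for all $t\in(0,t_1)$, $$t\int_{\mathbb R}\big|\bar s^{(n)}_t(x)-\tfrac{d}{dx}\log p^{(n)}_t(x)\big|^2p^{(n)}_t(x)\,dx\le C\exp\!\big(-\Delta^2/(9t)\big).$$
   Context: $y_k=2(k-1)\Delta-D$ ($k\in[n]$), $\Delta=D/(n-1)$, $z_k=y_k+\Delta$ ($k\in[n-1]$). $p_{\mathcal N}(x;\sigma)=(\sqrt{2\pi}\sigma)^{-1}e^{-x^2/(2\sigma^2)}$, $p^{(n)}_t(x)=\frac1n\sum_kp_{\mathcal N}(x-y_k;\sqrt t)$. Piecewise-linear ESF: $\bar s^{(n)}_t(x)=(y_1-x)/t$ if $x\le z_1$; $(y_k-x)/t$ if $x\in[z_{k-1},z_k]$, $k\in\{2,\dots,n-1\}$; $(y_n-x)/t$ if $x\ge z_{n-1}$. (For $n=2$, $D=\Delta=1$: $\bar s_t(x)=(\mathrm{sgn}(x)-x)/t$.) *)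

(* Defs.v *)
From HB Require Import structures.
From mathcomp Require Import all_boot all_order all_algebra.
From mathcomp Require Import all_classical all_reals all_analysis.
Set Implicit Arguments. Unset Strict Implicit. Unset Printing Implicit Defensive.
Import Order.TTheory GRing.Theory Num.Theory.
Import numFieldNormedType.Exports.
Local Open Scope ring_scope.

Section GaussMix.
Variable R : realType.

Definition Delta (n : nat) (D : R) : R := D / (n.-1)%:R.

Definition ypt (n : nat) (D : R) (k : nat) : R :=
  2 * ((k%:R - 1) * Delta n D) - D.

Definition zpt (n : nat) (D : R) (k : nat) : R := ypt n D k + Delta n D.

Definition gauss (x sigma : R) : R :=
  (Num.sqrt (2 * pi) * sigma)^-1 * expR (- (x ^+ 2) / (2 * sigma ^+ 2)).

Definition pmix (n : nat) (D t x : R) : R :=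
  n%:R^-1 * \sum_(1 <= k < n.+1) gauss (x - ypt n D k) (Num.sqrt t).

(* Index of the piece of the piecewise-linear ESF containing x:
   1 if x <= z_1; k if z_{k-1} < x <= z_k (2 <= k <= n-1); n if x > z_{n-1}.
   (On the measure-zero breakpoints the paper's overlapping cases are
   resolved by taking the left piece.) *)
Definition piece (n : nat) (D x : R) : nat :=
  (1 + \sum_(1 <= j < n) nat_of_bool (zpt n D j < x)%R)%N.

Definition sbar (n : nat) (D t x : R) : R :=
  (ypt n D (piece n D x) - x) / t.

End GaussMix.

(* Main.v *)
Require Import Defs.
From HB Require Import structures.
From mathcomp Require Import all_boot all_order all_algebra.
From mathcomp Require Import all_classical all_reals all_analysis.
From mathcomp Require Import ring lra zify.
Import Order.TTheory GRing.Theory Num.Theory.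
Import numFieldNormedType.Exports.
Local Open Scope ring_scope.
Lemma is_derive_bigsum {R : realType} (r : seq nat) (f : nat -> R -> R) (df : nat -> R) (x : R) :
  (forall i, is_derive x (1:R) (f i) (df i)) ->
  is_derive x 1 (fun u => \sum_(i <- r) f i u) (\sum_(i <- r) df i).
Proof.
move=> H; elim: r => [|i r IH].
  rewrite big_nil.
  have -> : (fun u : R => \sum_(i <- [::]) f i u) = cst 0.
    by apply/funext => u; rewrite big_nil.
  exact: is_derive_cst.
rewrite big_cons.
have -> : (fun u : R => \sum_(j <- i :: r) f j u) = f i + (fun u => \sum_(j <- r) f j u).
  by apply/funext => u; rewrite big_cons.
exact: is_deriveD.
Qed.

Lemma gauss_derive {R : realType} (y s x : R) : s != 0 ->
  is_derive x 1 (fun u => gauss (u - y) s) (gauss (x - y) s * ((y - x) / s ^+ 2)).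
Proof.
move=> s0; rewrite /gauss.
apply: is_derive_eq.
rewrite scaler0 add0r !subr0 !scaler1.
rewrite [LHS]/GRing.scale /=.
rewrite -mulrA; congr (_ * _).
set E := expR _.
have sc : forall a b : R, a *: b = a * b by [].
by rewrite sc; field.
Qed.

Lemma gauss_gt0 {R : realType} (u s : R) : 0 < s -> 0 < gauss u s.
Proof.
move=> s0; rewrite /gauss mulr_gt0 ?expR_gt0 // invr_gt0 mulr_gt0 //.
by rewrite sqrtr_gt0 mulr_gt0 ?pi_gt0.
Qed.

Lemma pmix_gt0 {R : realType} n (D t x : R) : (1 <= n)%N -> 0 < t -> 0 < pmix n D t x.
Proof.
move=> n1 t0; rewrite /pmix mulr_gt0 //.
  by rewrite invr_gt0 ltr0n.
rewrite big_ltn ?ltnS //.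
apply: ltr_wpDr; last by apply: gauss_gt0; rewrite sqrtr_gt0.
by apply: sumr_ge0 => i _; apply/ltW/gauss_gt0; rewrite sqrtr_gt0.
Qed.

Definition dpmix {R : realType} n (D t x : R) :=
  n%:R^-1 * \sum_(1 <= k < n.+1) gauss (x - ypt n D k) (Num.sqrt t) * ((ypt n D k - x) / t).

Lemma pmix_derive {R : realType} n (D t x : R) : 0 < t ->
  is_derive x 1 (pmix n D t) (dpmix n D t x).
Proof.
move=> t0.
have HS := @is_derive_bigsum R (index_iota 1 n.+1)
  (fun k u => gauss (u - ypt n D k) (Num.sqrt t))
  (fun k => gauss (x - ypt n D k) (Num.sqrt t) * ((ypt n D k - x) / t)) x.
have := is_deriveZ (n%:R^-1) (HS _).
apply.
move=> i; have := @gauss_derive R (ypt n D i) (Num.sqrt t) x.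
rewrite sqr_sqrtr ?ltW //; apply.
by rewrite gt_eqF // sqrtr_gt0.
Qed.

Lemma dlog_pmix {R : realType} n (D t x : R) : (1 <= n)%N -> 0 < t ->
  derive1 (fun u => ln (pmix n D t u)) x = dpmix n D t x / pmix n D t x.
Proof.
move=> n1 t0.
have H := @is_derive1_comp R (@ln R) (pmix n D t) x _ _ (is_derive1_ln (pmix_gt0 n D t x n1 t0)) (pmix_derive n D t x t0).
rewrite derive1E.
have -> : (fun u => ln (pmix n D t u)) = (@ln R \o pmix n D t) by [].
by rewrite derive_val mulrC.
Qed.
Lemma Delta_gt0 {R : realType} n (D : R) : (2 <= n)%N -> 0 < D -> 0 < Delta n D.
Proof.
move=> n2 D0; rewrite /Delta divr_gt0 // ltr0n.
by case: n n2 => [|[|n]].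
Qed.

Lemma ypt_le {R : realType} n (D : R) i j : (2 <= n)%N -> 0 < D -> (i <= j)%N ->
  ypt n D i <= ypt n D j.
Proof.
move=> n2 D0 ij; rewrite /ypt lerD2r ler_pM2l // ler_pM2r ?Delta_gt0 //.
by rewrite lerD2r ler_nat.
Qed.

Lemma zpt_le {R : realType} n (D : R) i j : (2 <= n)%N -> 0 < D -> (i <= j)%N ->
  zpt n D i <= zpt n D j.
Proof. by move=> n2 D0 ij; rewrite /zpt lerD2r ypt_le. Qed.

Lemma yptS {R : realType} n (D : R) i : ypt n D i.+1 = zpt n D i + Delta n D.
Proof. rewrite /zpt /ypt -addn1 natrD; ring. Qed.

Lemma piece_A {R : realType} n (D x : R) i : (2 <= n)%N -> 0 < D ->
  (1 <= i)%N -> (i < n)%N -> zpt n D i < x ->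
  (i <= \sum_(1 <= j < n) nat_of_bool (zpt n D j < x)%R)%N.
Proof.
move=> n2 D0 i1 iltn zx.
rewrite (big_cat_nat (n:=i.+1)) //=.
apply: leq_trans (leq_addr _ _).
have h1 : (\sum_(1 <= j < i.+1) 1 = i)%N by rewrite sum_nat_const_nat muln1 subn1.
rewrite -[X in (X <= _)%N]h1 leq_eqVlt; apply/orP; left; apply/eqP.
apply: eq_big_nat => j /andP [j1 ji].
by rewrite (le_lt_trans (zpt_le n D j i n2 D0 _) zx) // -ltnS.
Qed.

Lemma piece_B {R : realType} n (D x : R) i : (2 <= n)%N -> 0 < D ->
  (1 <= i)%N -> (i < n)%N -> x <= zpt n D i ->
  (\sum_(1 <= j < n) nat_of_bool (zpt n D j < x)%R < i)%N.
Proof.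
move=> n2 D0 i1 iltn xz.
rewrite (big_cat_nat (n:=i)) //=; last exact: ltnW.
rewrite [X in (_ + X)%N]big1_seq ?addn0; last first.
  move=> j /andP [_]; rewrite mem_index_iota => /andP [ij _].
  by rewrite ltNge (le_trans xz (zpt_le n D i j n2 D0 ij)).
apply: (@leq_ltn_trans (\sum_(1 <= j < i) 1)%N).
  by apply: leq_sum => j _; apply: leq_b1.
rewrite sum_nat_const_nat muln1; lia.
Qed.

Lemma sum_bool_le {R : realType} n (D x : R) :
  (\sum_(1 <= j < n) nat_of_bool (zpt n D j < x)%R <= n.-1)%N.
Proof.
apply: (@leq_trans (\sum_(1 <= j < n) 1)%N).
  by apply: leq_sum => j _; apply: leq_b1.
by rewrite sum_nat_const_nat muln1 subn1.
Qed.

Lemma piece_sep {R : realType} n (D x : R) j : (2 <= n)%N -> 0 < D ->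
  (1 <= j)%N -> (j <= n)%N -> j <> piece n D x ->
  Delta n D <= `|x - ypt n D j|.
Proof.
move=> n2 D0 j1 jn jp.
have mle := sum_bool_le n D x.
move: jp; rewrite /piece.
set m := (\sum_(1 <= j < n) _)%N in mle *.
move=> jp.
have [jm|mj] := leqP j m.
  have jltn : (j < n)%N by lia.
  have zx : zpt n D j < x.
    rewrite ltNge; apply/negP => xz.
    have := piece_B n D x j n2 D0 j1 jltn xz; rewrite -/m; lia.
  rewrite ler_normr; apply/orP; left.
  by move: zx; rewrite /zpt -ltrBrDl => /ltW.
case: j j1 jn jp mj => [//|i] _ jn jp mj.
have i1 : (1 <= i)%N by lia.
have iltn : (i < n)%N by lia.
have xz : x <= zpt n D i.
  rewrite leNgt; apply/negP => zx.
  have := piece_A n D x i n2 D0 i1 iltn zx; rewrite -/m; lia.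
rewrite ler_normr; apply/orP; right.
rewrite yptS opprB; move: xz; rewrite -(lerD2r (Delta n D)) => h.
lra.
Qed.

Lemma piece_range {R : realType} n (D x : R) : (2 <= n)%N ->
  (1 <= piece n D x <= n)%N.
Proof.
move=> n2; have := sum_bool_le n D x; rewrite /piece; lia.
Qed.

Lemma ypt_bound {R : realType} n (D : R) j : (2 <= n)%N -> 0 < D ->
  (1 <= j)%N -> (j <= n)%N -> - D <= ypt n D j <= D.
Proof.
move=> n2 D0 j1 jn.
have e : (n.-1)%:R * Delta n D = D.
  rewrite /Delta mulrC divfK // pnatr_eq0; lia.
have hj : 0 <= (j%:R - 1 : R) * Delta n D <= D.
  rewrite -{3}e; apply/andP; split.
    by rewrite mulr_ge0 ?subr_ge0 ?ler1n // ltW // Delta_gt0.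
  rewrite ler_pM2r ?Delta_gt0 //.
  have -> : (j%:R - 1 : R) = (j.-1)%:R by rewrite -subn1 natrB.
  by rewrite ler_nat; lia.
move: hj => /andP [h1 h2]; rewrite /ypt; apply/andP; split; lra.
Qed.
Lemma tail_bound {R : realType} (t Dl x y : R) : 0 < t -> 0 <= Dl -> Dl <= `|x - y| ->
  gauss (x - y) (Num.sqrt t) <=
  2 * expR (- (Dl ^+ 2) / (4 * t)) * normal_pdf y (Num.sqrt (2 * t)) x.
Proof.
move=> t0 Dl0 Dlu.
have s0 : Num.sqrt (2 * t) != 0 by rewrite gt_eqF // sqrtr_gt0 mulr_gt0.
rewrite normal_pdfE //= /normal_peak /normal_fun /gauss.
have t0' : 0 <= t by exact: ltW.
have t2 : 0 <= 2 * t by rewrite mulr_ge0.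
rewrite !sqr_sqrtr //.
set A := Num.sqrt (2 * pi) * Num.sqrt t.
set B := Num.sqrt (2 * t * pi *+ 2).
set u := x - y.
have A0 : 0 < A by rewrite mulr_gt0 // sqrtr_gt0 ?mulr_gt0 ?pi_gt0.
have B0 : 0 < B by rewrite sqrtr_gt0 pmulrn_lgt0 // mulr_gt0 ?pi_gt0 ?mulr_gt0.
have AB : B ^+ 2 = 2 * A ^+ 2.
  rewrite /B /A exprMn !sqr_sqrtr ?mulr_ge0 ?pi_ge0 //; last first.
    by rewrite mulrn_wge0 // mulr_ge0 ?pi_ge0.
  by rewrite -mulr_natr; ring.
have BA : B <= 2 * A by nra.
have iAB : A^-1 <= 2 * B^-1.
  have -> : 2 * B^-1 = (B / 2)^-1 by rewrite invf_div mulrC.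
  rewrite lef_pV2 ?posrE ?divr_gt0 //; lra.
have u2 : Dl ^+ 2 <= u ^+ 2.
  rewrite -(real_normK (num_real u)); nra.
have ex : expR (- u ^+ 2 / (2 * t)) <= expR (- Dl ^+ 2 / (4 * t)) * expR (- u ^+ 2 / (2 * t *+ 2)).
  rewrite -expRD ler_expR.
  have -> : - u ^+ 2 / (2 * t) = - u ^+ 2 / (4 * t) + - u ^+ 2 / (4 * t).
    by field; rewrite gt_eqF.
  have -> : 2 * t *+ 2 = 4 * t by rewrite -mulr_natr; ring.
  rewrite lerD2r !mulNr lerN2 ler_wpM2r // invr_ge0 mulr_ge0 //.
apply: le_trans (ler_pM _ _ iAB ex) _.
- by rewrite invr_ge0 ltW.
- exact: expR_ge0.
- by rewrite le_eqVlt; apply/orP; left; apply/eqP; ring.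
Qed.

Lemma le_int_nm {R : realType} (f g : R -> R) :
  (forall x, 0 <= f x) -> (forall x, f x <= g x) ->
  (\int[@lebesgue_measure R]_(x in [set: R]) (f x)%:E <=
   \int[@lebesgue_measure R]_(x in [set: R]) (g x)%:E)%E.
Proof.
move=> f0 fg.
have g0 : forall x, 0 <= g x by move=> x; exact: le_trans (f0 x) (fg x).
rewrite !ge0_integralTE; first last.
- by move=> x; rewrite lee_fin.
- by move=> x; rewrite lee_fin.
apply: ereal_sup_le => _ /= [h hf <-].
by exists h => // x; rewrite (le_trans (hf x)) // lee_fin.
Qed.
Lemma int_F {R : realType} n (K s : R) (ys : nat -> R) : 0 <= K ->
  (\int[@lebesgue_measure R]_(x in [set: R])
     (K * \sum_(1 <= j < n.+1) normal_pdf (ys j) s x)%:E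
   = (K * n%:R)%:E)%E.
Proof.
move=> K0.
under eq_integral do rewrite EFinM -sumEFin.
rewrite ge0_integralZl_EFin //; first last.
- apply: emeasurable_sum => j; apply/measurable_realfun.measurable_EFinP.
  exact: measurable_normal_pdf.
- move=> x _; apply: sume_ge0 => j _; rewrite lee_fin; exact: normal_pdf_ge0.
rewrite ge0_integral_sum //; first last.
- by move=> j x _; rewrite lee_fin normal_pdf_ge0.
- by move=> j; apply/measurable_realfun.measurable_EFinP; exact: measurable_normal_pdf.
under eq_bigr do rewrite integral_normal_pdf.
rewrite sumEFin EFinM; congr (_ * _)%E.
by rewrite sumr_const_nat subn1.
Qed.

Lemma pointwise {R : realType} n (D t x : R) : (2 <= n)%N -> 0 < D -> 0 < t ->
  (sbar n D t x - derive1 (fun u => ln (pmix n D t u)) x) ^+ 2 * pmix n D t x <=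
  8 * D ^+ 2 * expR (- (Delta n D ^+ 2) / (4 * t)) / (n%:R * t ^+ 2) *
  \sum_(1 <= j < n.+1) normal_pdf (ypt n D j) (Num.sqrt (2 * t)) x.
Proof.
move=> n2 D0 t0.
have n1 : (1 <= n)%N by lia.
rewrite dlog_pmix // /sbar /dpmix /pmix.
set k := piece n D x.
set a := fun j => gauss (x - ypt n D j) (Num.sqrt t).
set S := \sum_(1 <= j < n.+1) a j.
set Q := \sum_(1 <= j < n.+1) a j * (ypt n D j - x).
set W := \sum_(1 <= j < n.+1) a j * (ypt n D k - ypt n D j).
set E := expR (- (Delta n D ^+ 2) / (4 * t)).
set P := \sum_(1 <= j < n.+1) normal_pdf (ypt n D j) (Num.sqrt (2 * t)) x.
set U := \sum_(1 <= j < n.+1) (if j == k then 0 else a j).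
have a0 : forall j, 0 < a j by move=> j; apply: gauss_gt0; rewrite sqrtr_gt0.
have S0 : 0 < S by have := pmix_gt0 n D t x n1 t0; rewrite /pmix pmulr_rgt0 // invr_gt0 ltr0n; lia.
have nR0 : 0 < n%:R :> R by rewrite ltr0n; lia.
have hQ : \sum_(1 <= j < n.+1) a j * ((ypt n D j - x) / t) = Q / t.
  by rewrite /Q mulr_suml; apply: eq_bigr => j _; rewrite mulrA.
have hW : W = (ypt n D k - x) * S - Q.
  rewrite /W /Q /S mulr_sumr -sumrB; apply: eq_bigr => j _; ring.
rewrite hQ.
have key : ((ypt n D k - x) / t - n%:R^-1 * (Q / t) / (n%:R^-1 * S)) ^+ 2 * (n%:R^-1 * S)
   = W ^+ 2 / (t ^+ 2 * S * n%:R).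
  rewrite hW; field; rewrite !gt_eqF //.
rewrite key.
have /andP [k1 kn] := piece_range n D x n2.
have yk := ypt_bound n D k n2 D0 k1 kn.
have hWU : `|W| <= 2 * D * U.
  rewrite /W /U mulr_sumr; apply: le_trans (ler_norm_sum _ _ _) _.
  apply: ler_sum_nat => j /andP [j1 jn]; rewrite ltnS in jn.
  have [->|jk] := eqVneq j k; first by rewrite subrr mulr0 normr0 mulr0.
  have yj := ypt_bound n D j n2 D0 j1 jn.
  rewrite normrM gtr0_norm // mulrC; apply: ler_wpM2r; first exact: ltW.
  rewrite ler_norml; apply/andP; split; lra.
have hU0 : 0 <= U.
  by apply: sumr_ge0 => j _; case: ifP => _ //; exact: ltW.
have hUS : U <= S.
  apply: ler_sum_nat => j _; case: ifP => _ //; exact: ltW.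
have hUP : U <= 2 * E * P.
  rewrite /U /P mulr_sumr; apply: ler_sum_nat => j /andP [j1 jn]; rewrite ltnS in jn.
  case: ifP => [_|/eqP jk].
    by rewrite mulr_ge0 ?normal_pdf_ge0 // mulr_ge0 ?expR_ge0.
  apply: tail_bound => //; first exact/ltW/Delta_gt0.
  exact: piece_sep.
have hW2 : W ^+ 2 <= 4 * D ^+ 2 * S * U.
  rewrite -(real_normK (num_real W)).
  have hW0 : 0 <= `|W| := normr_ge0 W.
  have h1 : `|W| ^+ 2 <= (2 * D * U) ^+ 2.
    by rewrite !expr2; apply: ler_pM.
  apply: le_trans h1 _.
  have h2 : 0 <= 4 * D ^+ 2 * U.
    by apply: mulr_ge0 => //; apply: mulr_ge0 => //; exact: sqr_ge0.
  have -> : (2 * D * U) ^+ 2 = 4 * D ^+ 2 * U * U by ring.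
  have -> : 4 * D ^+ 2 * S * U = 4 * D ^+ 2 * U * S by ring.
  by apply: ler_wpM2l.
rewrite ler_pdivrMr; last by rewrite !mulr_gt0 // exprn_gt0.
have -> : 8 * D ^+ 2 * E / (n%:R * t ^+ 2) * P * (t ^+ 2 * S * n%:R) =
  4 * D ^+ 2 * S * (2 * E * P).
  by field; rewrite !gt_eqF // exprn_gt0.
apply: le_trans hW2 _.
by rewrite ler_wpM2l // !mulr_ge0 // ?ltW // sqr_ge0.
Qed.

Theorem mainTheorem3 (R : realType) (n : nat) (D : R) :
  (2 <= n)%N -> 0 < D ->
  exists t1 C : R, 0 < t1 /\ 0 < C /\
    forall t : R, 0 < t -> t < t1 ->
      (t%:E * \int[@lebesgue_measure R]_(x in [set: R])
          (((sbar n D t x - derive1 (fun u => ln (pmix n D t u)) x) ^+ 2)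
             * pmix n D t x)%:E
       <= (C * expR (- (Delta n D ^+ 2) / (9 * t)))%:E)%E.
Proof.
move=> n2 D0.
have Dl0 := Delta_gt0 n D n2 D0.
have n1 : (1 <= n)%N by lia.
have nR0 : 0 < n%:R :> R by rewrite ltr0n; lia.
exists 1, (8 * D ^+ 2 * (36 / (5 * Delta n D ^+ 2))).
split; first exact: ltr01.
split; first by rewrite !mulr_gt0 // ?exprn_gt0 // invr_gt0 mulr_gt0 // exprn_gt0.
move=> t t0 _.
set K := 8 * D ^+ 2 * expR (- (Delta n D ^+ 2) / (4 * t)) / (n%:R * t ^+ 2).
have K0 : 0 <= K.
  rewrite /K; apply: mulr_ge0; last by rewrite invr_ge0 mulr_ge0 ?sqr_ge0 // ltW.
  apply: mulr_ge0; last exact: expR_ge0. apply: mulr_ge0 => //; exact: sqr_ge0.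
have Hint' := le_int_nm _ _ (fun x => mulr_ge0 (sqr_ge0 _) (ltW (pmix_gt0 n D t x n1 t0)))
   (fun x => pointwise n D t x n2 D0 t0).
have t0' : (0 <= t%:E)%E by rewrite lee_fin ltW.
apply: le_trans (lee_wpmul2l t0' Hint') _.
rewrite int_F // -EFinM lee_fin.
set q := 5 * Delta n D ^+ 2 / (36 * t).
have hq : q * expR (- q) <= 1.
  rewrite -(expRxMexpNx_1 q) ler_wpM2r ?expR_ge0 //.
  by apply: le_trans (expR_ge1Dx q); lra.
have hE : expR (- (Delta n D ^+ 2) / (4 * t)) =
   expR (- (Delta n D ^+ 2) / (9 * t)) * expR (- q).
  have tn0 : t != 0 by rewrite gt_eqF.
  by rewrite -expRD; congr expR; rewrite /q; field.
have DD : Delta n D ^+ 2 != 0 by rewrite gt_eqF // exprn_gt0.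
have -> : t * (8 * D ^+ 2 * expR (- (Delta n D ^+ 2) / (4 * t)) / (n%:R * t ^+ 2) * n%:R)
  = 8 * D ^+ 2 * (36 / (5 * Delta n D ^+ 2)) * expR (- (Delta n D ^+ 2) / (9 * t))
    * (q * expR (- q)).
  rewrite hE /q; field; rewrite ?gt_eqF //.
rewrite -[leRHS]mulr1 ler_wpM2l //.
by rewrite !mulr_ge0 ?expR_ge0 ?sqr_ge0 // ltW // invr_gt0 mulr_gt0 // exprn_gt0.
Qed.
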